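(* For every $\ell\ge2$, $E_\ell\le\max\Big\{\frac1\ell\sum_{i=0}^{\ell-1}\log_\ell D_i : \{D_i\}_{i=0}^{\ell-1}\in\mathcal{V}^{(\ell)}_{LP}\Big\}$, where $\mathcal{V}^{(\ell)}_{LP}$ is the set of all $\ell$-dimensions LP-valid sequences.
   Context: A kernel of dimension $\ell$ is a bijection $g:\{0,1\}^\ell\to\{0,1\}^\ell$. ${\bf a}\bullet{\bf b}$ denotes concatenation, $d_H$ Hamming distance. Partial distances: $D_{min}^{(i)}=\min\{d_H(g({\bf w}\bullet 0\bullet{\bf u}),g({\bf w}\bullet 1\bullet {\bf v})) : {\bf w}\in\{0,1\}^i,\ {\bf u},{\bf v}\in\{0,1\}^{\ell-i-1}\}$; exponent $E(g)=\frac1\ell\sum_{i=0}^{\ell-1}\log_\ell D_{min}^{(i)}$; $E_\ell=\max_g E(g)$ over all kernels of dimension $\ell$. Let $d(n,k)$ be the largest possible minimum distance of a binary code of length $n$ with $2^k$ codewords, and $P_i(x)=\sum_{m=0}^{i}(-1)^m\binom{x}{m}\binom{\ell-x}{i-m}$. A sequence $\{D_i\}_{i=0}^{\ell-1}$ of non-negative integers, monotone non-decreasing with $D_i\le d(\ell,\ell-i)$, is an $\ell$-dimensions LP-valid sequence if there exist non-negative reals $\bar B_i^{(k)}$ ($k\in\{0,\dots,\ell-1\}$, $D_k\le i\le\ell$) with: (a) $\sum_{i=D_{\ell-r}}^{\ell}\bar B_i^{(\ell-r)}=2^r-1$ for $r\in\{1,\dots,\ell\}$; (b) $\bar B_i^{(\ell-r)}\ge\bar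 B_i^{(\ell-r+1)}$ for $r\in\{1,\dots,\ell-1\}$, $D_{\ell-r+1}\le i\le\ell$; (c) $\sum_{j=D_{\ell-r}}^{\ell}\bar B_j^{(\ell-r)}P_i(j)\ge-\binom{\ell}{i}$ for $i\in\{0,\dots,\ell\}$, $r\in\{1,\dots,\ell\}$. *)

(* Defs.v *)
From Stdlib Require Import Reals.
From mathcomp Require Import all_boot.

Set Implicit Arguments. Unset Strict Implicit. Unset Printing Implicit Defensive.

(* binary vectors of length l; coordinate j is position j (0-based), so
   x = w . b . u with |w| = i means x i = b and x j = w_j for j < i *)
Definition bv (l : nat) := {ffun 'I_l -> bool}.

Definition dH (l : nat) (x y : bv l) : nat := #|[pred j : 'I_l | x j != y j]|.

Definition kernel (l : nat) (g : bv l -> bv l) : Prop := bijective g.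

(* x = w.0.u and y = w.1.v for some w of length i *)
Definition split_at (l i : nat) (x y : bv l) : bool :=
  [forall j : 'I_l, ((j < i) ==> (x j == y j)) &&
                    ((nat_of_ord j == i) ==> (~~ x j && y j))].

(* partial distance D_min^{(i)} (a minimum of Hamming distances, all <= l,
   over a nonempty set when i < l; the default value l is thus harmless) *)
Definition Dmin (l : nat) (g : bv l -> bv l) (i : nat) : nat :=
  \big[minn/l]_(x : bv l) \big[minn/l]_(y : bv l | split_at i x y) dH (g x) (g y).

Definition logb (l : nat) (x : R) : R := Rdiv (ln x) (ln (INR l)).

Definition seq_exponent (l : nat) (D : nat -> nat) : R :=
  Rmult (Rinv (INR l)) (\big[Rplus/R0]_(i < l) logb l (INR (D i))).

Definition exponent (l : nat) (g : bv l -> bv l) : R := seq_exponent l (Dmin g).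

(* minimum distance of a code (used only for codes with >= 2 words) *)
Definition min_dist (n : nat) (C : {set bv n}) : nat :=
  \big[minn/n]_(x in C) \big[minn/n]_(y in C | y != x) dH x y.

Definition dcode (n k : nat) : nat :=
  \max_(C : {set bv n} | #|C| == 2 ^ k) min_dist C.

Definition kraw (l i x : nat) : R :=
  \big[Rplus/R0]_(m < i.+1)
     Rmult (Rmult (pow (-1) m) (INR 'C(x, m))) (INR 'C(l - x, i - m)).

(* l-dimensions LP-valid sequence {D_i}_{i=0}^{l-1} (values of D at i >= l
   are irrelevant) *)
Definition LP_valid (l : nat) (D : nat -> nat) : Prop :=
  (forall i, i.+1 < l -> D i <= D i.+1) /\
  (forall i, i < l -> D i <= dcode l (l - i)) /\
  exists B : nat -> nat -> R,
    (forall k i, k < l -> D k <= i <= l -> Rle R0 (B k i)) /\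
    (* (a) *)
    (forall r, 1 <= r <= l ->
       \big[Rplus/R0]_(D (l - r) <= i < l.+1) B (l - r) i
       = Rminus (pow 2 r) R1) /\
    (* (b) *)
    (forall r i, 1 <= r <= l - 1 -> D (l - r + 1) <= i <= l ->
       Rge (B (l - r) i) (B (l - r + 1) i)) /\
    (* (c) *)
    (forall i r, i <= l -> 1 <= r <= l ->
       Rge (\big[Rplus/R0]_(D (l - r) <= j < l.+1) Rmult (B (l - r) j) (kraw l i j))
           (Ropp (INR 'C(l, i)))).

(* Main.v *)
Require Import Defs.
From Stdlib Require Import Reals.
From mathcomp Require Import all_boot all_order all_algebra.
From mathcomp Require Import Rstruct.
Set Implicit Arguments. Unset Strict Implicit. Unset Printing Implicit Defensive.

Import Order.TTheory GRing.Theory Num.Theory.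

Section Agree.
Variable l : nat.

Definition agree (S : {set 'I_l}) (x y : bv l) := [forall j in S, x j == y j].

Definition rho (S : {set 'I_l}) (x : bv l) : bv l :=
  [ffun j => if j \in S then x j else false].

Lemma agreeE S x y : agree S x y = (rho S x == rho S y).
Proof.
apply/forall_inP/eqP => H.
- apply/ffunP => j; rewrite !ffunE; case: ifP => // jS; exact/eqP/H.
- move=> j jS; have := congr1 (fun f : bv l => f j) H; rewrite !ffunE jS => ->; by [].
Qed.

Lemma agree_refl S x : agree S x x.
Proof. by apply/forall_inP. Qed.

Lemma agree_sub (S T : {set 'I_l}) x y : S \subset T -> agree T x y -> agree S x y.
Proof. by move=> ST /forall_inP H; apply/forall_inP => j jS; apply: H; apply: (subsetP ST). Qed.

Lemma card_agree S x : #|[set y | agree S x y]| = 2 ^ (l - #|S|).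
Proof.
pose h (y : bv l) : bv l := [ffun j => x j (+) y j].
have hinj : injective h.
  move=> y1 y2 /ffunP E; apply/ffunP => j; have := E j; rewrite !ffunE.
  by case: (x j); case: (y1 j); case: (y2 j).
have -> : [set y | agree S x y] = h @^-1: [set y | y \in pffun_on false (~: S) predT].
  apply/setP => y; rewrite !inE; apply/forall_inP/pffun_onP => [H|[H _]].
  - split; last by move=> ? ?.
    apply/subsetP => j; rewrite !inE ffunE; apply: contraR => jS.
    by rewrite negbK in jS; move/eqP: (H j jS) => ->; case: (y j).
  - move=> j jS; have := subsetP H j; rewrite !inE ffunE jS /=.
    by case: (x j); case: (y j) => //= /(_ isT).
rewrite card_preimset // cardsE card_pffun_on.
rewrite card_bool; congr (2 ^ _); have E : #|S| + #|~:S| = l by rewrite cardsC card_ord.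
have := max_card (mem S); rewrite card_ord => HS.
apply: (@addnI #|S|); by rewrite E subnKC.
Qed.
End Agree.

Section K.
Variable l : nat.
Local Open Scope ring_scope.

Definition chi (Z : {set 'I_l}) (a : bv l) : R := (-1) ^+ #|[set j in Z | a j]|.

Lemma chi_mul Z a b : chi Z a * chi Z b = (-1) ^+ #|Z :&: [set j | a j != b j]|.
Proof.
rewrite /chi -exprD.
set X := [set j in Z | a j]; set Y := [set j in Z | b j].
have E1 : (#|X| = #|X :&: Y| + #|X :\: Y|)%N by rewrite cardsID.
have E2 : (#|Y| = #|X :&: Y| + #|Y :\: X|)%N by rewrite setIC cardsID.
have E3 : Z :&: [set j | a j != b j] = (X :\: Y) :|: (Y :\: X).
  apply/setP => j; rewrite !inE; case: (j \in Z); case: (a j); case: (b j) => //.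
have E4 : (#|(X :\: Y) :|: (Y :\: X)| = #|X :\: Y| + #|Y :\: X|)%N.
  rewrite cardsU; have -> : (X :\: Y) :&: (Y :\: X) = set0.
    by apply/setP => j; rewrite !inE; case: (j \in Z); case: (a j); case: (b j).
  by rewrite cards0 subn0.
rewrite E3 E4 E1 E2 addnACA addnn -muln2 exprD exprM sqrr_sign mul1r //.
Qed.

Lemma card_split (D : {set 'I_l}) (i m : nat) : (m <= i)%N ->
  #|[set Z : {set 'I_l} | (#|Z| == i) && (#|Z :&: D| == m)]| =
  ('C(#|D|, m) * 'C(l - #|D|, i - m))%N.
Proof.
move=> mi.
pose f (Z : {set 'I_l}) := (Z :&: D, Z :\: D).
have finj : injective f.
  by move=> Z1 Z2 [E1 E2]; rewrite -(setID Z1 D) -(setID Z2 D) E1 E2.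
rewrite -(card_imset _ finj).
have -> : f @: [set Z : {set 'I_l} | (#|Z| == i) && (#|Z :&: D| == m)] =
   setX [set U : {set 'I_l} | U \subset D & #|U| == m] [set V : {set 'I_l} | V \subset ~: D & #|V| == (i - m)%N].
  apply/setP => -[U V]; rewrite !inE /=; apply/imsetP/andP => [[Z]|[/andP[UD Um] /andP[VD Vm]]].
  - rewrite inE => /andP[/eqP Zi /eqP Zm] [-> ->]; split.
      by rewrite subsetIr Zm eqxx.
    rewrite setDE subsetIr /=; apply/eqP.
    by rewrite -Zi -Zm -setDE -(cardsID D Z) addKn.
  - exists (U :|: V).
      rewrite inE; apply/andP; split.
        rewrite cardsU; have -> : U :&: V = set0.
          apply/setP => j; rewrite !inE; apply/negbTE/negP => /andP[jU jV].
          by move: (subsetP UD j jU) (subsetP VD j jV); rewrite inE => ->.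
        by rewrite cards0 subn0 (eqP Um) (eqP Vm) subnKC.
      rewrite setIUl (setIidPl UD); have -> : V :&: D = set0.
        apply/setP => j; rewrite !inE; apply/negbTE/negP => /andP[jV jD].
        by move: (subsetP VD j jV); rewrite inE jD.
      by rewrite setU0.
    rewrite /f setIUl (setIidPl UD) setDUl; congr (_, _).
    + have -> : V :&: D = set0.
        apply/setP => j; rewrite !inE; apply/negbTE/negP => /andP[jV jD].
        by move: (subsetP VD j jV); rewrite inE jD.
      by rewrite setU0.
    + have -> : U :\: D = set0 by apply/eqP; rewrite setD_eq0.
      rewrite set0U; apply/setP => j; rewrite !inE; case jV: (j \in V); rewrite ?andbF //.
      by move: (subsetP VD j jV); rewrite inE => ->.
rewrite cardsX !cards_draws; congr (_ * 'C(_, _))%N.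
have E : (#|D| + #|~:D| = l)%N by rewrite cardsC card_ord.
have := max_card (mem D); rewrite card_ord => HD.
by apply: (@addnI #|D|); rewrite E subnKC.
Qed.

Lemma kraw_sum i (D : {set 'I_l}) :
  \sum_(Z : {set 'I_l} | #|Z| == i) (-1) ^+ #|Z :&: D| = kraw l i #|D|.
Proof.
rewrite (partition_big (fun Z : {set 'I_l} => (inord #|Z :&: D| : 'I_i.+1)) predT) //=.
rewrite /kraw; apply: eq_bigr => m _.
have mi : (m <= i)%N by rewrite -ltnS ltn_ord.
rewrite (eq_bigr (fun _ => (-1) ^+ m)); last first.
  move=> Z /andP[/eqP Zi /eqP <-]; rewrite inordK //.
  by rewrite ltnS -Zi subset_leq_card // subsetIl.
rewrite (eq_bigl (mem [set Z : {set 'I_l} | (#|Z| == i) && (#|Z :&: D| == m)])); last first.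
  move=> Z; rewrite !inE; case Zi: (#|Z| == i) => //=.
  have Hle : (#|Z :&: D| < i.+1)%N by rewrite ltnS -(eqP Zi) subset_leq_card // subsetIl.
  apply/eqP/eqP => [<-|E]; first by rewrite inordK.
  by apply: val_inj; rewrite /= inordK.
rewrite sumr_const card_split // RmultE RmultE RpowE !INRE.
have N1 : IZR (Zneg 1) = - 1 :> R by [].
by rewrite N1 -mulrA -natrM mulr_natr.
Qed.

Lemma kraw_dH i (a b : bv l) :
  kraw l i (dH a b) = \sum_(Z : {set 'I_l} | #|Z| == i) chi Z a * chi Z b.
Proof.
have -> : dH a b = #|[set j | a j != b j]| by apply: eq_card => j; rewrite inE.
rewrite -kraw_sum; apply: eq_bigr => Z _; by rewrite chi_mul.
Qed.

Lemma sum_agree_sq (S : {set 'I_l}) (f : bv l -> R) :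
  0 <= \sum_(p : bv l * bv l | agree S p.1 p.2) f p.1 * f p.2.
Proof.
rewrite (eq_bigl (fun p : bv l * bv l => predT p.1 && agree S p.1 p.2)) //.
rewrite -(pair_big_dep predT (fun x y => agree S x y) (fun x y => f x * f y)) /=.
pose Sw (w : bv l) := \sum_(y | rho S y == w) f y.
rewrite (eq_bigr (fun x => f x * Sw (rho S x))); last first.
  move=> x _; rewrite mulr_sumr; apply: eq_bigl => y; by rewrite agreeE eq_sym.
rewrite (partition_big (rho S) predT) //=.
apply: sumr_ge0 => w _.
rewrite (eq_bigr (fun x => f x * Sw w)); last by move=> x /eqP ->.
by rewrite -mulr_suml -expr2 sqr_ge0.
Qed.
End K.

Lemma delsarte l (S : {set 'I_l}) (h : bv l -> bv l) i :
  (0 <= \sum_(p : bv l * bv l | agree S p.1 p.2) kraw l i (dH (h p.1) (h p.2)))%R.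
Proof.
rewrite (eq_bigr (fun p => \sum_(Z : {set 'I_l} | #|Z| == i) chi Z (h p.1) * chi Z (h p.2)))%R;
  last by move=> p _; rewrite kraw_dH.
rewrite exchange_big /=; apply: sumr_ge0 => Z _.
exact: (sum_agree_sq S (fun x => chi Z (h x))).
Qed.

Lemma bigmin_le (I : eqType) (r : seq I) (P : pred I) (F : I -> nat) (d : nat) i0 :
  i0 \in r -> P i0 -> \big[minn/d]_(i <- r | P i) F i <= F i0.
Proof.
elim: r => // a r IH; rewrite inE big_cons => /orP[/eqP <- | ir] Pi.
  by rewrite Pi geq_minl.
case: (P a); last exact: IH.
apply: leq_trans (geq_minr _ _) _; exact: IH.
Qed.

Section Main.
Variable l : nat.
Variable g : bv l -> bv l.
Hypothesis ginj : injective g.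

Definition Dm (i : nat) := Dmin g i.
Definition leD := fun i j : nat => Dm i <= Dm j.
Definition s := sort leD (iota 0 l).
Definition DD (k : nat) := Dm (nth 0 s k).
Definition Sk (k : nat) : {set 'I_l} := [set j : 'I_l | index (val j) s < k].

Lemma perm_s : perm_eq s (iota 0 l).
Proof. by rewrite /s perm_sort perm_refl. Qed.

Lemma size_s : size s = l.
Proof. by rewrite (perm_size perm_s) size_iota. Qed.

Lemma mem_s j : (j \in s) = (j < l).
Proof. by rewrite (perm_mem perm_s) mem_iota. Qed.

Lemma sorted_s : sorted leD s.
Proof. apply: sort_sorted => i j; exact: leq_total. Qed.

Lemma DD_mono i j : i <= j -> j < l -> DD i <= DD j.
Proof.
move=> ij jl; rewrite /DD.
have tr : transitive leD by move=> a b c; rewrite /leD; apply: leq_trans.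
have rf : reflexive leD by move=> a; rewrite /leD.
apply: (sorted_leq_nth tr rf 0 sorted_s) => //.
- by rewrite inE size_s (leq_ltn_trans ij).
- by rewrite inE size_s.
Qed.

Lemma DD_le_out k (j : 'I_l) : j \notin Sk k -> DD k <= Dm j.
Proof.
rewrite inE -leqNgt => kj.
have js : (val j \in s) by rewrite mem_s ltn_ord.
have jl : index (val j) s < size s by rewrite index_mem.
rewrite size_s in jl.
have := DD_mono kj jl; by rewrite /DD (nth_index 0 js).
Qed.

Lemma Sk_mono k : Sk k \subset Sk k.+1.
Proof. apply/subsetP => j; rewrite !inE => H; exact: ltnW. Qed.

Lemma card_lt k : k <= l -> #|[set m : 'I_l | m < k]| = k.
Proof.
move=> kl.
have -> : [set m : 'I_l | m < k] = widen_ord kl @: [set: 'I_k].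
  apply/setP => m; rewrite inE; apply/idP/imsetP => [mk|[m' _ ->]].
  - by exists (Ordinal mk) => //; apply: val_inj.
  - by rewrite /= ltn_ord.
rewrite card_imset ?cardsT ?card_ord //.
by move=> a b /(congr1 val) /= E; apply: val_inj.
Qed.

Lemma index_lt (j : 'I_l) : index (val j) s < l.
Proof.
have js : (val j \in s) by rewrite mem_s ltn_ord.
have jl : index (val j) s < size s by rewrite index_mem.
by rewrite size_s in jl.
Qed.

Definition posf (j : 'I_l) : 'I_l := Ordinal (index_lt j).

Lemma posf_inj : injective posf.
Proof.
move=> a b /(congr1 val) /= E; apply: val_inj.
apply: (index_inj 0 _ _ E); by rewrite mem_s ltn_ord.
Qed.

Lemma card_Sk k : k <= l -> #|Sk k| = k.
Proof.
move=> kl.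
have -> : Sk k = posf @^-1: [set m : 'I_l | m < k] by apply/setP => j; rewrite !inE.
by rewrite card_preimset ?card_lt //; exact: posf_inj.
Qed.

Lemma dH_le (a b : bv l) : dH a b <= l.
Proof. by rewrite /dH; have := max_card (mem [pred j | a j != b j]); rewrite card_ord. Qed.

Lemma dH_sym (a b : bv l) : dH a b = dH b a.
Proof. by apply: eq_card => j; rewrite !inE eq_sym. Qed.

Lemma dH0 (a b : bv l) : (dH a b == 0) = (a == b).
Proof.
apply/idP/idP.
- move/eqP/card0_eq => H; apply/eqP/ffunP => j; have := H j; rewrite !inE /=.
  by move/negbFE/eqP.
- move/eqP->; apply/eqP; apply: eq_card0 => j; by rewrite !inE eqxx.
Qed.

Lemma Dm_le_l i : Dm i <= l.
Proof.
rewrite /Dm /Dmin; elim/big_ind: _ => //.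
- by move=> a b Ha Hb; rewrite geq_min Ha.
- move=> x _; elim/big_ind: _ => //.
  + by move=> a b Ha Hb; rewrite geq_min Ha.
  + move=> y _; exact: dH_le.
Qed.

Lemma Dm_split i x y : split_at i x y -> Dm i <= dH (g x) (g y).
Proof.
move=> H; rewrite /Dm /Dmin.
apply: leq_trans (bigmin_le _ _ (mem_index_enum x) isT) _.
exact: (bigmin_le _ _ (mem_index_enum y) H).
Qed.

Lemma Dm_pos i : i < l -> 0 < Dm i.
Proof.
move=> il; rewrite /Dm /Dmin; elim/big_ind: _ => //.
- exact: (leq_ltn_trans _ il).
- by move=> a b Ha Hb; rewrite leq_min Ha Hb.
- move=> x _; elim/big_ind: _ => //.
  + exact: (leq_ltn_trans _ il).
  + by move=> a b Ha Hb; rewrite leq_min Ha Hb.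
  + move=> y /forallP /(_ (Ordinal il)) /andP[_ /implyP /(_ (eqxx _)) /andP[xi yi]].
    rewrite lt0n dH0; apply/negP => /eqP /ginj E; rewrite E in xi; by rewrite yi in xi.
Qed.

Lemma key k x y : agree (Sk k) x y -> x != y -> DD k <= dH (g x) (g y).
Proof.
move=> A xy.
have : [exists j, x j != y j].
  rewrite -negb_forall; apply: contra xy => /forallP H; apply/eqP/ffunP => j; exact/eqP/H.
case/existsP => j0 Hj0.
case: (@arg_minnP _ j0 (fun j => x j != y j) val Hj0) => j Pj minj.
have jS : j \notin Sk k.
  apply: contra Pj => jS; move/forall_inP: A => /(_ j jS) /eqP ->; by rewrite eqxx.
apply: leq_trans (DD_le_out jS) _.
have lt : forall j' : 'I_l, j' < j -> x j' == y j'.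
  move=> j' jj'; apply/negPn/negP => H; have := minj j' H; by rewrite leqNgt jj'.
case xj: (x j).
- have yj : y j = false by move: Pj; rewrite xj; case: (y j).
  rewrite dH_sym; apply: Dm_split; apply/forallP => j'; apply/andP; split.
    by apply/implyP => /lt; rewrite eq_sym.
  apply/implyP => /eqP /val_inj ->; by rewrite xj yj.
- have yj : y j = true by move: Pj; rewrite xj; case: (y j).
  apply: Dm_split; apply/forallP => j'; apply/andP; split.
    by apply/implyP => /lt.
  apply/implyP => /eqP /val_inj ->; by rewrite xj yj.
Qed.

Lemma DD_pos k : k < l -> 0 < DD k.
Proof.
move=> kl; apply: Dm_pos; rewrite -mem_s mem_nth // size_s //.
Qed.

Lemma DD_le k : DD k <= l.
Proof. exact: Dm_le_l. Qed.

Definition Nk k i := #|[set p : bv l * bv l | agree (Sk k) p.1 p.2 && (dH (g p.1) (g p.2) == i)]|.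

Lemma N0 k : Nk k 0 = 2 ^ l.
Proof.
rewrite /Nk.
have -> : [set p : bv l * bv l | agree (Sk k) p.1 p.2 && (dH (g p.1) (g p.2) == 0)] =
          (fun x => (x, x)) @: [set: bv l].
  apply/setP => -[x y]; rewrite !inE /= dH0; apply/andP/imsetP => [[_ /eqP /ginj ->]|[z _ [-> ->]]].
  - by exists y; rewrite ?inE.
  - by split; [exact: agree_refl | exact: eqxx].
rewrite card_imset; last by move=> a b [].
by rewrite cardsT card_ffun card_bool card_ord.
Qed.

Lemma Nsmall k j : 0 < j < DD k -> Nk k j = 0.
Proof.
move=> /andP[j0 jD]; apply/eqP; rewrite cards_eq0; apply/eqP/setP => -[x y].
rewrite !inE /=; apply/negbTE/negP => /andP[A /eqP E].
have xy : x != y.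
  apply/negP => /eqP xy; move: E; rewrite xy => E.
  have := dH0 (g y) (g y); rewrite E eqxx => /eqP; by move: j0 => /[swap] ->.
by have := key A xy; rewrite E leqNgt jD.
Qed.

Lemma Nmono k j : Nk k.+1 j <= Nk k j.
Proof.
apply: subset_leq_card; apply/subsetP => p; rewrite !inE => /andP[A E].
by rewrite (agree_sub (Sk_mono k) A).
Qed.

Lemma DD_dcode k : k < l -> DD k <= dcode l (l - k).
Proof.
move=> kl.
pose z : bv l := [ffun=> false].
pose C := g @: [set y | agree (Sk k) z y].
have cC : #|C| = 2 ^ (l - k) by rewrite card_imset // card_agree card_Sk // ltnW.
apply: leq_trans (leq_bigmax_cond C _); last by rewrite cC.
rewrite /min_dist; elim/big_ind: _ => //.
- exact: DD_le.
- by move=> a b Ha Hb; rewrite leq_min Ha Hb.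
- move=> x xC; elim/big_ind: _ => //.
  + exact: DD_le.
  + by move=> a b Ha Hb; rewrite leq_min Ha Hb.
  + move=> y /andP[yC yx].
    case/imsetP: xC => x' x'in Ex; case/imsetP: yC => y' y'in Ey; rewrite Ex Ey.
    rewrite inE in x'in; rewrite inE in y'in.
    apply: key.
      by rewrite agreeE -(eqP (etrans (esym (agreeE _ _ _)) x'in)) -agreeE.
    by apply/negP => /eqP E; move: yx; rewrite Ey Ex E eqxx.
Qed.

Local Open Scope ring_scope.

Lemma sum_total k (F : nat -> R) :
  \sum_(p : bv l * bv l | agree (Sk k) p.1 p.2) F (dH (g p.1) (g p.2)) =
  \sum_(j < l.+1) (Nk k j)%:R * F j.
Proof.
rewrite (partition_big (fun p : bv l * bv l => (inord (dH (g p.1) (g p.2)) : 'I_l.+1)) predT) //=.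
apply: eq_bigr => j _.
rewrite (eq_bigr (fun _ => F j)); last first.
  move=> p /andP[_ /eqP <-]; rewrite inordK //; rewrite ltnS; exact: dH_le.
rewrite (eq_bigl (fun p => p \in [set p : bv l * bv l | agree (Sk k) p.1 p.2 && (dH (g p.1) (g p.2) == j)])); last first.
  move=> p; rewrite !inE; case: (agree _ _ _) => //=.
  have Hl : (dH (g p.1) (g p.2) < l.+1)%N by rewrite ltnS dH_le.
  apply/eqP/eqP => [<-|E]; first by rewrite inordK.
  by apply: val_inj; rewrite /= inordK // E.
by rewrite sumr_const mulr_natl.
Qed.

Lemma Ntotal k : (k <= l)%N -> \sum_(j < l.+1) (Nk k j)%:R = (2 ^ l * 2 ^ (l - k))%:R :> R.
Proof.
move=> kl.
have H := sum_total k (fun _ => 1).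
rewrite (eq_bigr (fun j : 'I_l.+1 => (Nk k j)%:R)) in H; last by move=> j _; rewrite mulr1.
rewrite -H.
rewrite (eq_bigl (fun p : bv l * bv l => predT p.1 && agree (Sk k) p.1 p.2)) //.
rewrite -(pair_big_dep predT (fun x y => agree (Sk k) x y) (fun _ _ => 1)) /=.
rewrite (eq_bigr (fun _ => (2 ^ (l - k))%:R)).
  rewrite sumr_const; set c := #|_|.
  have -> : c = (2 ^ l)%N.
    rewrite /c; transitivity #|{ffun 'I_l -> bool}|; first exact: eq_card.
    by rewrite card_ffun card_bool card_ord.
  by rewrite natrM mulr_natl.
move=> x _; rewrite (eq_bigl (fun y => y \in [set y | agree (Sk k) x y])); last by move=> y; rewrite inE.
by rewrite sumr_const card_agree card_Sk.
Qed.

Lemma split_sum k (a : nat -> R) : (0 < DD k)%N ->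
  (forall j, (0 < j < DD k)%N -> a j = 0) ->
  \sum_(j < l.+1) a j = a 0%N + \sum_(DD k <= j < l.+1) a j.
Proof.
move=> Dp H.
rewrite -(big_mkord xpredT) (big_cat_nat _ (n := DD k)) //=; last exact: leq_trans (DD_le k) (leqnSn l).
rewrite big_ltn // big_nat_cond big1 ?addr0 //.
move=> j /andP[/andP[j1 j2] _]; apply: H; by rewrite j1 j2.
Qed.
End Main.

Lemma kraw0 l i : kraw l i 0 = (('C(l, i))%:R)%R.
Proof.
have := kraw_sum i (set0 : {set 'I_l}). rewrite cards0 => <-.
rewrite (eq_bigr (fun _ => 1%R)); last by move=> Z _; rewrite setI0 cards0 expr0.
rewrite (eq_bigl (fun Z => Z \in [set Z : {set 'I_l} | #|Z| == i])); last by move=> Z; rewrite inE.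
by rewrite sumr_const card_draws card_ord.
Qed.

Lemma sum_perm l (g : bv l -> bv l) :
  \big[Rplus/R0]_(i < l) logb l (INR (Dmin g i)) =
  \big[Rplus/R0]_(i < l) logb l (INR (DD g i)).
Proof.
set F := fun j => logb l (INR (Dmin g j)).
transitivity (\big[Rplus/R0]_(0 <= j < l) F j); first by rewrite big_mkord.
rewrite /index_iota subn0 -(perm_big _ (perm_s g)).
rewrite -{1}(mkseq_nth 0 (s g)) /mkseq big_map size_s.
have -> : iota 0 l = index_iota 0 l by rewrite /index_iota subn0.
by rewrite big_mkord.
Qed.

Theorem proposition4 (l : nat) (hl : 2 <= l) :
  forall g : bv l -> bv l, kernel g ->
  exists D : nat -> nat,
    LP_valid l D /\ (forall i, i < l -> 0 < D i) /\
    Rle (exponent g) (seq_exponent l D).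
Proof.
move=> g [h gK hK]; have ginj : injective g := can_inj gK.
have c0 : ((2 ^ l)%:R != 0 :> R)%R by rewrite pnatr_eq0 expn_eq0.
pose B k i : R := ((Nk g k i)%:R / (2 ^ l)%:R)%R.
exists (DD g); split; [|split].
- split; [|split].
  + by move=> i il; apply: DD_mono.
  + by move=> i il; apply: DD_dcode.
  exists B; split; [|split; [|split]].
  + move=> k i _ _; apply/RleP; by rewrite divr_ge0 ?ler0n.
  + move=> r /andP[r1 rl].
    set k := l - r.
    have kl : k < l by rewrite /k ltn_subrL r1 (leq_trans _ rl).
    have lk : l - k = r by rewrite /k subKn.
    have Dp := DD_pos ginj kl.
    have Hs := split_sum (a := fun j => (Nk g k j)%:R%R) Dp.
    rewrite Ntotal ?(ltnW kl) // N0 // lk in Hs.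
    have {}Hs : (\sum_(DD g k <= j < l.+1) (Nk g k j)%:R = (2 ^ l * 2 ^ r)%:R - (2 ^ l)%:R :> R)%R.
      rewrite Hs; first by rewrite addrC addKr.
      by move=> j Hj; rewrite Nsmall.
    have E : (\sum_(DD g k <= i < l.+1) B k i = 2%:R ^+ r - 1 :> R)%R.
      have c1 : (2%:R ^+ l != 0 :> R)%R by rewrite -natrX.
      rewrite /B -mulr_suml Hs natrM !natrX mulrBl divff // mulrAC mulfV // mul1r //.
    transitivity (2%:R ^+ r - 1 : R)%R; first exact: E.
    have two : IZR (Zpos (xO xH)) = 2%:R%R by rewrite IZRposE INRE.
    by rewrite RpowE two.
  + move=> r i _ _; rewrite addn1; apply: Rle_ge; apply/RleP.
    rewrite /B; apply: ler_wpM2r; first by rewrite invr_ge0 ler0n.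
    by rewrite ler_nat; exact: Nmono.
  + move=> i r il /andP[r1 rl].
    set k := l - r.
    have kl : k < l by rewrite /k ltn_subrL r1 (leq_trans _ rl).
    have Dp := DD_pos ginj kl.
    have Hs := split_sum (a := fun j => ((Nk g k j)%:R * kraw l i j)%R) Dp.
    rewrite -sum_total N0 // kraw0 in Hs.
    have {}Hs := Hs (fun j Hj => ltac:(by rewrite /= Nsmall // mul0r)).
    have del := delsarte (Sk g k) g i.
    have cp : (0 < (2 ^ l)%:R :> R)%R by rewrite ltr0n expn_gt0.
    have E : (\sum_(DD g k <= j < l.+1) (B k j * kraw l i j) =
              (\sum_(DD g k <= j < l.+1) (Nk g k j)%:R * kraw l i j) / (2 ^ l)%:R :> R)%R.
      rewrite mulr_suml; apply: eq_bigr => j _; by rewrite /B mulrAC.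
    apply: Rle_ge; apply/RleP; rewrite INRE.
    suff H : (- 'C(l, i)%:R <= \sum_(DD g k <= j < l.+1) (B k j * kraw l i j) :> R)%R by exact: H.
    rewrite E ler_pdivlMr // mulNr mulrC; rewrite Hs in del.
    by rewrite -subr_ge0 opprK addrC.
- move=> i il; exact: (DD_pos ginj il).
- rewrite /exponent /seq_exponent sum_perm; exact: Rle_refl.
Qed.
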